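(* Let $S=p_1,\ldots,p_n$ have independent entries uniform on $[0,1]$, and let $x=x_1x_2\ldots$ and $y=y_1y_2\ldots$ be two independent traces of $S$. Fix the deletion patterns of both traces, and consider two length-$w$ windows $x_{i},\ldots,x_{i+w-1}$ and $y_j,\ldots,y_{j+w-1}$. Let $q$ be the number of $t\in\{0,\ldots,w-1\}$ such that $x_{i+t}$ and $y_{j+t}$ originate from the same original position $k$ (i.e. both are flips of the same $p_k$), and let $r=w-q$. Then for every $\beta>0$, with probability taken over the randomness of $S$ and the coin flips (but not the deletions), $$\Pr\left[\left|\sum_{t=0}^{w-1}|x_{i+t}-y_{j+t}|-\left(\frac q3+\frac r2\right)\right|\ge\beta\right]\le2\exp\left(\frac{-2\beta^2}{w}\right).$$
   Context: A trace of $S=p_1,\ldots,p_n$ with deletion probability $\delta$: sample independent bits $t_k$ with $\Pr[t_k=1]=p_k$, delete each independently with probability $\delta$, and concatenate the surviving bits; each surviving bit thus originates from a specific original position $k$. *)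

(* Defs.v *)
From Stdlib Require Import Reals.
From Coquelicot Require Import Coquelicot.
From mathcomp Require Import all_boot.
From mathcomp Require Import all_algebra.
From mathcomp Require Import Rstruct.

Set Implicit Arguments.
Unset Strict Implicit.
Unset Printing Implicit Defensive.

(* Integral of F over the cube [0,1]^n, where F : (nat -> R) -> R only
   looks at the coordinates p 0, ..., p (n-1). *)
Fixpoint cube_int (n : nat) (F : (nat -> R) -> R) : R :=
  match n with
  | O => F (fun _ => 0%R)
  | S m => RInt (fun u => cube_int m (fun p => F (fun k => if k == m then u else p k))) 0%R 1%R
  end.

Definition b2R (b : bool) : R := if b then 1%R else 0%R.

Definition coin_weight (n : nat) (p : nat -> R) (c : {ffun 'I_n -> bool}) : R :=
  (\prod_(k < n) (if c k then p k else 1 - p k))%R.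

(* A deletion pattern is a vector D : {ffun 'I_n -> bool}, D k = true iff
   position k survives.  [origins D] is the list of original positions
   (0-based) of the surviving bits, in order: the m-th bit of the trace
   originates from position nth 0 (origins D) m. *)
Definition origins (n : nat) (D : {ffun 'I_n -> bool}) : seq nat :=
  [seq nat_of_ord k | k <- enum 'I_n & D k].

Definition trace (n : nat) (c D : {ffun 'I_n -> bool}) : seq bool :=
  [seq c k | k <- enum 'I_n & D k].

Definition same_origin_count (n : nat) (Dx Dy : {ffun 'I_n -> bool}) (i j w : nat) : nat :=
  count (fun t => nth 0%N (origins Dx) (i + t)%N == nth 0%N (origins Dy) (j + t)%N) (iota 0 w).

Definition window_dist (x y : seq bool) (i j w : nat) : R :=
  (\sum_(t < w) Rabs (b2R (nth false x (i + t)%N) - b2R (nth false y (j + t)%N)))%R.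

(* Probability, over S uniform on [0,1]^n and the independent coin flips of
   the two traces (deletion patterns Dx, Dy fixed), of the event E on the two
   traces x, y. *)
Definition trace_prob (n : nat) (Dx Dy : {ffun 'I_n -> bool})
    (E : seq bool -> seq bool -> bool) : R :=
  cube_int n (fun p =>
    (\sum_(cx : {ffun 'I_n -> bool}) \sum_(cy : {ffun 'I_n -> bool})
       coin_weight p cx * coin_weight p cy
       * (if E (trace cx Dx) (trace cy Dy) then 1 else 0))%R).

(* Main.v *)
Require Import Defs.
From Stdlib Require Import Reals Lra Psatz.
From Coquelicot Require Import Coquelicot.
From mathcomp Require Import all_boot all_order all_algebra Rstruct.
Open Scope R_scope.
Lemma mono_deriv (f df : R -> R) (a b : R) :
  (forall x, is_derive f x (df x)) -> (forall x, a <= x <= b -> 0 <= df x) ->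
  a <= b -> f a <= f b.
Proof.
intros Hd Hp Hab. destruct (Rle_lt_or_eq_dec _ _ Hab) as [Hlt|<-]; [|lra].
destruct (MVT_cor3 f df a b Hlt) as [c [H1 [H2 H3]]].
- intros x _ _. apply is_derive_Reals. apply Hd.
- rewrite H3. assert (0 <= df c) by (apply Hp; lra). nra.
Qed.

Lemma exp_le' x y : x <= y -> exp x <= exp y.
Proof. intro H. destruct (Rle_lt_or_eq_dec _ _ H) as [H'|<-]; [left; apply exp_increasing; exact H'| right; reflexivity]. Qed.

Lemma hoeffding_lemma (p s : R) : 0 < p < 1 ->
  exp (- s * p) * (1 - p + p * exp s) <= exp (s ^ 2 / 8).
Proof.
intros Hp.
set (D := fun s => 1 - p + p * exp s).
assert (HD : forall s, 0 < D s).
{ intro x. unfold D. pose proof (exp_pos x). nra. }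
set (u := fun s => p * exp s / D s).
assert (Hu : forall s, 0 <= u s <= 1).
{ intro x. unfold u. pose proof (exp_pos x). pose proof (HD x). unfold D in *.
  split. apply Rmult_le_pos; [nra| left; apply Rinv_0_lt_compat; lra].
  apply Rmult_le_reg_r with (1 - p + p * exp x); [lra|].
  unfold Rdiv. rewrite Rmult_assoc Rinv_l; lra. }
set (g1 := fun s => s / 4 + p - u s).
set (g := fun s => s ^ 2 / 8 + s * p - ln (D s)).
assert (Hg1d : forall x, is_derive g1 x (1/4 - u x + u x ^ 2)).
{ intro x. unfold g1, u, D. pose proof (HD x). unfold D in *. auto_derive.
  - lra.
  - field. lra. }
assert (Hgd : forall x, is_derive g x (g1 x)).
{ intro x. unfold g, g1, u, D. pose proof (HD x). unfold D in *. auto_derive.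
  - lra.
  - field. lra. }
assert (Hg10 : g1 0 = 0).
{ unfold g1, u, D; cbv beta. rewrite exp_0. field; lra. }
assert (Hg0 : g 0 = 0).
{ unfold g, D; cbv beta. rewrite exp_0. replace (1 - p + p * 1) with 1 by ring. rewrite ln_1. simpl; lra. }
assert (Hgpos : 0 <= g s).
{ destruct (Rle_or_lt 0 s) as [Hs|Hs].
  - rewrite <- Hg0. apply (mono_deriv g g1); auto.
    intros x Hx. rewrite <- Hg10. apply (mono_deriv g1 (fun x => 1/4 - u x + u x ^ 2)); auto.
    + intros y _; cbv beta; pose proof (pow2_ge_0 (u y - 1/2)); nra.
    + lra.
    (* g decreasing on (-inf,0]: use -g *)
    assert (Hm : forall x, is_derive (fun y => - g y) x (- g1 x)).
    { intro x. unfold g, g1, u, D. pose proof (HD x). unfold D in *. auto_derive; [lra | field; lra]. }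
    assert (- g s <= - g 0).
    { apply (mono_deriv _ _ s 0 Hm); [|lra].
      intros x Hx. assert (g1 x <= g1 0).
      { apply (mono_deriv g1 (fun x => 1/4 - u x + u x ^ 2)); auto; [|lra].
        intros y _; cbv beta; pose proof (pow2_ge_0 (u y - 1/2)); nra. }
      lra. }
    lra. }
unfold g in Hgpos.
replace (1 - p + p * exp s) with (exp (ln (D s))) by (rewrite exp_ln; [reflexivity| apply HD]).
rewrite <- exp_plus. apply exp_le'. lra.
Qed.

Lemma poly_int (F f : R -> R) (v : R) :
  (forall x, is_derive F x (f x)) -> (forall x, ex_derive f x) ->
  F 1 - F 0 = v -> is_RInt f 0 1 v.
Proof.
intros HF Hf Hv. rewrite <- Hv.
apply (is_RInt_derive F f 0 1).
- intros x _. apply HF.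
- intros x _. apply (ex_derive_continuous (K:=R_AbsRing) (V:=R_NormedModule)). apply Hf.
Qed.

Lemma int_tt : is_RInt (fun u => u * u) 0 1 (/3).
Proof.
apply (poly_int (fun u => u * u * u / 3)).
- intro x. auto_derive; [easy|field]. 
- intro x. auto_derive. auto.
- field.
Qed.

Lemma int_ff : is_RInt (fun u => (1 - u) * (1 - u)) 0 1 (/3).
Proof.
apply (poly_int (fun u => - ((1 - u) * (1 - u) * (1 - u)) / 3)).
- intro x. auto_derive; [easy|field].
- intro x. auto_derive. auto.
- field.
Qed.

Lemma int_tf : is_RInt (fun u => u * (1 - u)) 0 1 (/6).
Proof.
apply (poly_int (fun u => u * u / 2 - u * u * u / 3)).
- intro x. auto_derive; [easy|field].
- intro x. auto_derive. auto.
- field.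
Qed.

Lemma int_ft : is_RInt (fun u => (1 - u) * u) 0 1 (/6).
Proof.
apply (poly_int (fun u => u * u / 2 - u * u * u / 3)).
- intro x. auto_derive; [easy|field].
- intro x. auto_derive. auto.
- field.
Qed.

Lemma final_arith (b W : R) : 0 < W ->
  exp (- (4 * b / W) * b) * (2 * exp (W * ((4 * b / W) ^ 2 / 8))) = 2 * exp (- 2 * b ^ 2 / W).
Proof.
intro HW. rewrite Rmult_comm Rmult_assoc -exp_plus. f_equal. f_equal. field. lra.
Qed.

Close Scope R_scope.
From mathcomp Require Import ring lra.
Import Order.Theory GRing.Theory Num.Theory.

Set Implicit Arguments.
Unset Strict Implicit.
Unset Printing Implicit Defensive.

Local Open Scope ring_scope.

Definition rho (b1 b2 : bool) : R := if b1 == b2 then 3^-1 else 6^-1.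

Definition upd n (c : {ffun 'I_n -> bool}) (k : 'I_n) (b : bool) : {ffun 'I_n -> bool} :=
  [ffun l => if l == k then b else c l].

Section Disc.
Variable n : nat.
Notation T := {ffun 'I_n -> bool}.

Definition mu (cx cy : T) : R := \prod_(k < n) rho (cx k) (cy k).
Definition Ex (F : T -> T -> R) : R := \sum_(cx : T) \sum_(cy : T) mu cx cy * F cx cy.

Lemma sum_split (k : 'I_n) (G : T -> R) :
  \sum_(c : T) G c = \sum_(b : bool) \sum_(c : T | c k == false) G (upd c k b).
Proof.
rewrite (partition_big (fun c : T => c k) xpredT) //=.
apply: eq_bigr => b _.
rewrite (reindex_onto (fun c => upd c k b) (fun c => upd c k false)).
  apply: eq_bigl => c. rewrite !ffunE eqxx eqxx /=.
  apply/eqP; case: eqP => [E|NE].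
    apply/ffunP => l; rewrite !ffunE; case: eqP => [->|//]. by rewrite -E.
  move=> /= H; apply: NE. by rewrite -H ffunE eqxx.
move=> c /eqP Hc; apply/ffunP => l; rewrite !ffunE; case: eqP => [->|//]. by rewrite Hc.
Qed.

Lemma updE (c : T) k b l : upd c k b l = if l == k then b else c l.
Proof. by rewrite ffunE. Qed.

Lemma upd_other (c : T) k b l : l != k -> upd c k b l = c l.
Proof. by rewrite ffunE => /negbTE ->. Qed.

Lemma upd_same (c : T) k b : upd c k b k = b.
Proof. by rewrite ffunE eqxx. Qed.

Lemma mu_upd (k : 'I_n) cx cy b1 b2 :
  mu (upd cx k b1) (upd cy k b2) = rho b1 b2 * \prod_(l < n | l != k) rho (cx l) (cy l).
Proof.
rewrite /mu (bigD1 k) //= !upd_same; congr (_ * _).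
by apply: eq_bigr => l Hl; rewrite !upd_other.
Qed.

Lemma Ex_decomp (k : 'I_n) F :
  Ex F = \sum_(cx : T | cx k == false) \sum_(cy : T | cy k == false)
           \prod_(l < n | l != k) rho (cx l) (cy l) *
           \sum_(b1 : bool) \sum_(b2 : bool) rho b1 b2 * F (upd cx k b1) (upd cy k b2).
Proof.
rewrite /Ex (sum_split k) exchange_big /=.
apply: eq_bigr => cx _.
under eq_bigr do rewrite (sum_split k) exchange_big /=.
rewrite exchange_big /=.
apply: eq_bigr => cy _.
rewrite mulr_sumr; apply: eq_bigr => b1 _.
rewrite mulr_sumr; apply: eq_bigr => b2 _.
rewrite mu_upd. ring.
Qed.

Lemma Ex_ext F G : (forall cx cy, F cx cy = G cx cy) -> Ex F = Ex G.
Proof. by move=> H; apply: eq_bigr => cx _; apply: eq_bigr => cy _; rewrite H. Qed.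

Lemma rho_sum : \sum_(b1 : bool) \sum_(b2 : bool) rho b1 b2 = 1.
Proof. rewrite !big_bool /rho /=. by field. Qed.

Lemma Ex_factor (k : 'I_n) (G H : T -> T -> R) m :
  (forall cx cy b1 b2, G (upd cx k b1) (upd cy k b2) = G cx cy) ->
  (forall cx cy, \sum_(b1 : bool) \sum_(b2 : bool) rho b1 b2 * H (upd cx k b1) (upd cy k b2) = m) ->
  Ex (fun cx cy => G cx cy * H cx cy) = m * Ex G.
Proof.
move=> HG HH.
rewrite (Ex_decomp k) (Ex_decomp k G) mulr_sumr; apply: eq_bigr => cx _.
rewrite mulr_sumr; apply: eq_bigr => cy _.
have E1 : \sum_(b1 : bool) \sum_(b2 : bool) rho b1 b2 * (G (upd cx k b1) (upd cy k b2) * H (upd cx k b1) (upd cy k b2))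
   = G cx cy * m.
  rewrite -(HH cx cy) mulr_sumr; apply: eq_bigr => b1 _.
  rewrite mulr_sumr; apply: eq_bigr => b2 _. rewrite HG. ring.
have E2 : \sum_(b1 : bool) \sum_(b2 : bool) rho b1 b2 * G (upd cx k b1) (upd cy k b2) = G cx cy.
  rewrite -[RHS]mulr1 -rho_sum mulr_sumr; apply: eq_bigr => b1 _.
  rewrite mulr_sumr; apply: eq_bigr => b2 _. rewrite HG. ring.
rewrite E1 E2. ring.
Qed.

Lemma Ex1 : Ex (fun _ _ => 1) = 1.
Proof.
rewrite /Ex /mu.
transitivity (\prod_(k < n) \sum_(b1 : bool) \sum_(b2 : bool) rho b1 b2); last first.
  by rewrite big1 // => k _; rewrite rho_sum.
rewrite bigA_distr_bigA /=; apply: eq_bigr => cx _.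
rewrite bigA_distr_bigA /=; apply: eq_bigr => cy _.
by rewrite mulr1.
Qed.


Lemma exp0R : exp 0 = 1.
Proof. exact: exp_0. Qed.

Lemma rho_ge0 b1 b2 : 0 <= rho b1 b2.
Proof. by rewrite /rho; case: ifP => _; rewrite invr_ge0 ler0n. Qed.

Lemma mu_ge0 cx cy : 0 <= mu cx cy.
Proof. by apply: prodr_ge0 => k _; apply: rho_ge0. Qed.

Lemma Ex_le F G : (forall cx cy, F cx cy <= G cx cy) -> Ex F <= Ex G.
Proof.
move=> H; apply: ler_sum => cx _; apply: ler_sum => cy _.
by apply: ler_wpM2l; [apply: mu_ge0 | apply: H].
Qed.

Lemma Ex_add F G : Ex (fun cx cy => F cx cy + G cx cy) = Ex F + Ex G.
Proof.
rewrite /Ex -big_split; apply: eq_bigr => cx _.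
rewrite -big_split; apply: eq_bigr => cy _ /=; ring.
Qed.

Lemma Ex_scale c F : Ex (fun cx cy => c * F cx cy) = c * Ex F.
Proof.
rewrite /Ex mulr_sumr; apply: eq_bigr => cx _.
rewrite mulr_sumr; apply: eq_bigr => cy _ /=; ring.
Qed.

Section Mgf.
Variables (A B : nat -> 'I_n) (w : nat).
Hypothesis hA : forall s t, (s < t)%N -> (t < w)%N -> (A s < A t)%N.
Hypothesis hB : forall s t, (s < t)%N -> (t < w)%N -> (B s < B t)%N.

Definition Zb t (cx cy : T) : bool := cx (A t) != cy (B t).
Definition Mg (l : R) t : R := if A t == B t then (2 + exp l) / 3 else (1 + exp l) / 2.

Lemma neq_of_lt (a b : 'I_n) : (a < b)%N -> a != b.
Proof. by move=> H; apply/eqP => E; move: H; rewrite E ltnn. Qed.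

Lemma Ex_mgf l w' : (w' <= w)%N ->
  Ex (fun cx cy => \prod_(t < w') exp (l * b2R (Zb t cx cy))) = \prod_(t < w') Mg l t.
Proof.
elim: w' => [_|w' IH Hw].
  rewrite big_ord0. transitivity (Ex (fun _ _ => 1)); last exact: Ex1.
  by apply: eq_bigr => cx _; apply: eq_bigr => cy _; rewrite big_ord0.
set k := if (A w' < B w')%N then B w' else A w'.
have Hlt : forall t, (t < w')%N -> (A t < k)%N /\ (B t < k)%N.
  move=> t Ht; rewrite /k; case: ifP => H.
    split; last exact: hB.
    by apply: ltn_trans H; apply: hA.
  split; first exact: hA.
  apply: (@leq_trans (B w')); first exact: hB.
  by rewrite leqNgt H.
rewrite (@Ex_ext _ (fun cx cy => (\prod_(t < w') exp (l * b2R (Zb t cx cy))) * exp (l * b2R (Zb w' cx cy)))); last first.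
  by move=> cx cy; rewrite big_ord_recr.
rewrite (Ex_factor (k := k) (m := Mg l w')).
- rewrite big_ord_recr /= mulrC; congr (_ * _); apply: IH; exact: ltnW.
- move=> cx cy b1 b2; apply: eq_bigr => t _.
  have [H1 H2] := Hlt t (ltn_ord t).
  by rewrite /Zb !upd_other // neq_of_lt.
- move=> cx cy; rewrite /Zb /Mg /k !big_bool /rho /=.
  case: ltnP => H.
    have E : (A w' == B w') = false by apply: negbTE; apply: neq_of_lt.
    rewrite !updE eqxx E /=.
    case: (cx (A w')) => /=; rewrite /b2R /= ?Rmult_0_r ?Rmult_1_r ?mulr0 ?mulr1 ?exp0R; field; done.
  have [E1|E1] := eqVneq (A w') (B w').
    rewrite !updE -E1 eqxx /=.
    rewrite /b2R /= ?Rmult_0_r ?Rmult_1_r ?mulr0 ?mulr1 ?exp0R; field; done.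
  have E' : (B w' == A w') = false by apply/negbTE; rewrite eq_sym.
  rewrite !updE eqxx E' /=.
  case: (cy (B w')) => /=; rewrite /b2R /= ?Rmult_0_r ?Rmult_1_r ?mulr0 ?mulr1 ?exp0R; field; done.
Qed.

Definition pt t : R := if A t == B t then 3^-1 else 2^-1.
Definition Sk (cx cy : T) : R := \sum_(t < w) b2R (Zb t cx cy).
Definition mu0 : R := \sum_(t < w) pt t.

Lemma hoeff_R (p s : R) : 0 < p < 1 -> exp (- s * p) * (1 - p + p * exp s) <= exp (s ^ 2 / 8).
Proof. by move=> /andP [/RltP H1 /RltP H2]; apply/RleP; apply: hoeffding_lemma. Qed.

Lemma hoeff_Mg l t : Mg l t * exp (- l * pt t) <= exp (l ^ 2 / 8).
Proof.
rewrite /Mg /pt; case: ifP => _.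
  have H : (0 < (3^-1 : R) < 1) by lra.
  apply: le_trans (hoeff_R l H); rewrite le_eqVlt; apply/orP; left; apply/eqP.
  by field.
have H : (0 < (2^-1 : R) < 1) by lra.
apply: le_trans (hoeff_R l H); rewrite le_eqVlt; apply/orP; left; apply/eqP; by field.
Qed.

Lemma expD (x y : R) : exp (x + y)%R = exp x * exp y.
Proof. exact: exp_plus. Qed.

Lemma exp_sum (I : Type) (r : seq I) (P : pred I) (F : I -> R) :
  exp (\sum_(i <- r | P i) F i) = \prod_(i <- r | P i) exp (F i).
Proof.
elim: r => [|x r IH]; first by rewrite !big_nil exp0R.
rewrite !big_cons; case: (P x) => //.
by rewrite -IH -expD.
Qed.

Lemma exp_split l cx cy :
  exp (l * (Sk cx cy - mu0)) =
  (\prod_(t < w) exp (- l * pt t)) * \prod_(t < w) exp (l * b2R (Zb t cx cy)).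
Proof.
rewrite -!exp_sum -expD; congr exp.
rewrite /Sk /mu0 RmultE RminusE mulrBr !mulr_sumr.
rewrite addrC; congr (_ + _).
rewrite -sumrN; apply: eq_bigr => t _; rewrite RmultE RoppE; ring.
Qed.

Lemma Ex_exp l : Ex (fun cx cy => exp (l * (Sk cx cy - mu0))) <= exp (INR w * (l ^ 2 / 8)).
Proof.
rewrite (Ex_ext (G := fun cx cy => (\prod_(t < w) exp (- l * pt t)) *
                    \prod_(t < w) exp (l * b2R (Zb t cx cy)))); last by move=> cx cy; rewrite exp_split.
rewrite Ex_scale Ex_mgf // -big_split /=.
have -> : exp (INR w * (l ^ 2 / 8)) = \prod_(t < w) exp (l ^ 2 / 8).
  by rewrite -exp_sum sumr_const card_ord INRE RmultE mulr_natl.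
apply: ler_prod => t _; apply/andP; split.
  apply: mulr_ge0; first by apply/RleP; left; apply: exp_pos.
  have H0 : 0 < exp l by apply/RltP; apply: exp_pos.
  rewrite /Mg; case: ifP => _; lra.
by rewrite mulrC; apply: hoeff_Mg.
Qed.

Lemma ind_bound (s b x : R) : Rlt 0 s ->
  Rle (if Rle_dec b (Rabs x) then 1 else 0) (exp (- s * b) * (exp (s * x) + exp (- s * x))).
Proof.
move=> Hs.
have E1 := exp_pos (s * x); have E2 := exp_pos (- s * x); have E3 := exp_pos (- s * b).
case: Rle_dec => H /=; last by apply: Rmult_le_pos; Lra.lra.
rewrite -R1E Rmult_plus_distr_l -!exp_plus.
have [Hx|Hx] := Rle_or_lt 0 x.
  have Ea : Rabs x = x by apply: Rabs_right; Lra.lra.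
  move: H; rewrite Ea => H.
  have : Rle (exp 0) (exp (- s * b + s * x)) by apply: exp_le'; Psatz.nra.
  rewrite exp_0; have := exp_pos (- s * b + - s * x); Lra.lra.
have Ea : Rabs x = Ropp x by apply: Rabs_left; Lra.lra.
move: H; rewrite Ea => H.
have : Rle (exp 0) (exp (- s * b + - s * x)) by apply: exp_le'; Psatz.nra.
rewrite exp_0; have := exp_pos (- s * b + s * x); Lra.lra.
Qed.

Lemma tail_bound (s b : R) : 0 < s ->
  Ex (fun cx cy => if Rle_dec b (Rabs (Sk cx cy - mu0)) then 1 else 0)
  <= exp (- s * b) * (2 * exp (INR w * (s ^ 2 / 8))).
Proof.
move=> Hs.
pose G := fun cx cy => exp (- s * b) * (exp (s * (Sk cx cy - mu0)) + exp (- s * (Sk cx cy - mu0))).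
have HB : forall cx cy, (if Rle_dec b (Rabs (Sk cx cy - mu0)) then 1 else 0) <= G cx cy.
  by move=> cx cy; apply/RleP; apply: ind_bound; apply/RltP.
apply: le_trans (Ex_le HB) _.
rewrite Ex_scale Ex_add; apply: ler_wpM2l.
  apply/RleP; left; apply: exp_pos.
have H1 := Ex_exp s; have H2 := Ex_exp (Ropp s).
have E : pow (Ropp s) 2 = pow s 2 by rewrite !RpowE RoppE sqrrN.
rewrite E in H2.
apply: le_trans (lerD H1 H2) _.
lra.
Qed.
End Mgf.

End Disc.

Lemma is_RInt_sum (I : Type) (r : seq I) (g : I -> R -> R) (v : I -> R) :
  (forall a, is_RInt (g a) 0 1 (v a)) ->
  is_RInt (fun u => \sum_(a <- r) g a u) 0 1 (\sum_(a <- r) v a).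
Proof.
move=> H; elim: r => [|x r IH].
  rewrite big_nil.
  apply: (is_RInt_ext (fun _ : R => (0 : R))).
    by move=> u _; rewrite big_nil.
  have H0 := is_RInt_const 0 1 (0:R).
  by rewrite /scal /= /mult /= Rmult_0_r in H0.
rewrite big_cons.
apply: (is_RInt_ext (fun u => plus (g x u) (\sum_(a <- r) g a u))).
  by move=> u _; rewrite big_cons.
exact: is_RInt_plus (H x) IH.
Qed.

Lemma cube_int_ext m (F G : (nat -> R) -> R) :
  (forall p, F p = G p) -> cube_int m F = cube_int m G.
Proof.
elim: m F G => [|m IH] F G H /=; first exact: H.
apply: RInt_ext => u _; apply: IH => p; exact: H.
Qed.

Lemma cube_prod (I : finType) (f : I -> nat -> R -> R) :
  (forall a k, ex_RInt (f a k) 0 1) ->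
  forall m (c : I -> R),
  cube_int m (fun p => \sum_(a : I) c a * \prod_(k < m) f a k (p k)) =
  \sum_(a : I) c a * \prod_(k < m) RInt (f a k) 0 1.
Proof.
move=> Hf; elim=> [|m IH] c /=.
  by apply: eq_bigr => a _; rewrite !big_ord0.
rewrite (RInt_ext _ (fun u => \sum_(a : I) (c a * \prod_(k < m) RInt (f a k) 0 1) * f a m u)); last first.
  move=> u _.
  rewrite (@cube_int_ext m _ (fun p => \sum_(a : I) (c a * f a m u) * \prod_(k < m) f a k (p k))); last first.
    move=> p; apply: eq_bigr => a _.
    rewrite big_ord_recr /= eqxx.
    rewrite (eq_bigr (fun k : 'I_m => f a k (p k))); last first.
      by move=> k _; rewrite (ltn_eqF (ltn_ord k)).
    ring.
  rewrite IH; apply: eq_bigr => a _; ring.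
apply: is_RInt_unique.
apply: (is_RInt_ext (fun u => \sum_(a : I) scal (c a * \prod_(k < m) RInt (f a k) 0 1) (f a m u))).
  by [].
rewrite [X in is_RInt _ _ _ X](_ : _ = \sum_(a : I) scal (c a * \prod_(k < m) RInt (f a k) 0 1) (RInt (f a m) 0 1)); last first.
  apply: eq_bigr => a _; rewrite big_ord_recr /= /scal /= /mult /=. rewrite RmultE; ring.
apply: is_RInt_sum => a.
apply: is_RInt_scal; exact: RInt_correct.
Qed.


Section TP.
Variable n : nat.
Notation T := {ffun 'I_n -> bool}.

Definition hfun (b1 b2 : bool) (u : R) : R := (if b1 then u else 1 - u) * (if b2 then u else 1 - u).

Lemma inv3 : (3^-1 : R) = Rinv 3.
Proof. by rewrite RinvE IZRposE INRE. Qed.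
Lemma inv6 : (6^-1 : R) = Rinv 6.
Proof. by rewrite RinvE IZRposE INRE. Qed.

Lemma is_RInt_h b1 b2 : is_RInt (hfun b1 b2) 0 1 (rho b1 b2).
Proof.
case: b1; case: b2; rewrite /rho /= ?inv3 ?inv6.
- exact: int_tt.
- exact: int_tf.
- exact: int_ft.
- exact: int_ff.
Qed.

Definition fa (a : T * T) (k : nat) (u : R) : R :=
  oapp (fun o : 'I_n => hfun (a.1 o) (a.2 o) u) 1 (insub k).

Lemma ex_RInt_fa a k : ex_RInt (fa a k) 0 1.
Proof.
rewrite /fa; case: (insub k) => [o|] /=.
  by eexists; apply: is_RInt_h.
exact: ex_RInt_const.
Qed.

Lemma trace_prob_Ex (Dx Dy : T) (E : seq bool -> seq bool -> bool) :
  trace_prob Dx Dy E = Ex (fun cx cy => if E (trace cx Dx) (trace cy Dy) then 1 else 0).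
Proof.
rewrite /trace_prob.
rewrite (@cube_int_ext n _ (fun p => \sum_(a : T * T) (if E (trace a.1 Dx) (trace a.2 Dy) then 1 else 0)
             * \prod_(k < n) fa a k (p k))); last first.
  move=> p; rewrite pair_big /=; apply: eq_bigr => a _.
  rewrite mulrC /coin_weight -big_split /=; congr (_ * _).
  by apply: eq_bigr => k _; rewrite /fa valK.
rewrite cube_prod; last exact: ex_RInt_fa.
rewrite /Ex pair_big /=; apply: eq_bigr => a _.
rewrite mulrC /mu; congr (_ * _); apply: eq_bigr => k _.
rewrite /fa valK /=; apply: is_RInt_unique; exact: is_RInt_h.
Qed.
End TP.

Lemma sum_if_count (P : pred nat) (a b : R) w :
  \sum_(t < w) (if P t then a else b) =
  (count P (iota 0 w))%:R * a + (w - count P (iota 0 w))%:R * b.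
Proof.
elim: w => [|w IH]; first by rewrite big_ord0 /= !mul0r addr0.
have -> : iota 0 w.+1 = iota 0 w ++ [:: w] by rewrite -addn1 iotaD.
rewrite big_ord_recr IH count_cat /= addn0.
have Hc : (count P (iota 0 w) <= w)%N by rewrite -[X in (_ <= X)%N](size_iota 0 w) count_size.
case: (P w) => /=.
  rewrite addn1 subSS -[(count P (iota 0 w)).+1]addn1 natrD; ring.
rewrite addn0 subSn // -[(w - _).+1]addn1 natrD; ring.
Qed.

Section Link.
Variables (n : nat) (Dx Dy : {ffun 'I_n -> bool}) (i j w : nat).
Hypothesis hx : (i + w <= size (origins Dx))%N.
Hypothesis hy : (j + w <= size (origins Dy))%N.
Variable x0 : 'I_n.

Definition fs (D : {ffun 'I_n -> bool}) := [seq k <- enum 'I_n | D k].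
Definition Aw t := nth x0 (fs Dx) (i + t).
Definition Bw t := nth x0 (fs Dy) (j + t).

Lemma origins_fs D : origins D = map val (fs D).
Proof. by []. Qed.

Lemma size_fs D : size (fs D) = size (origins D).
Proof. by rewrite origins_fs size_map. Qed.

Lemma sorted_fs D : sorted (relpre val ltn) (fs D).
Proof.
apply: sorted_filter; first by move=> a b c /=; exact: ltn_trans.
by rewrite -sorted_map val_enum_ord; exact: iota_ltn_sorted.
Qed.

Lemma mono_fs D (s t : nat) : (s < t)%N -> (t < size (fs D))%N ->
  (nth x0 (fs D) s < nth x0 (fs D) t)%N.
Proof.
move=> Hst Ht.
have tr : transitive (relpre (val : 'I_n -> nat) ltn) by move=> a b c /=; exact: ltn_trans.
apply: (sorted_ltn_nth tr x0 (sorted_fs D)) => //; rewrite inE //.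
exact: ltn_trans Ht.
Qed.

Lemma hA : forall s t, (s < t)%N -> (t < w)%N -> (Aw s < Aw t)%N.
Proof.
move=> s t Hst Htw; apply: mono_fs; first by rewrite ltn_add2l.
rewrite size_fs; apply: leq_trans hx; by rewrite ltn_add2l.
Qed.

Lemma hB : forall s t, (s < t)%N -> (t < w)%N -> (Bw s < Bw t)%N.
Proof.
move=> s t Hst Htw; apply: mono_fs; first by rewrite ltn_add2l.
rewrite size_fs; apply: leq_trans hy; by rewrite ltn_add2l.
Qed.

Lemma trace_nthx (cx : {ffun 'I_n -> bool}) t : (t < w)%N -> nth false (trace cx Dx) (i + t) = cx (Aw t).
Proof.
move=> Ht; rewrite /trace (nth_map x0) //.
rewrite -/(fs Dx) size_fs; apply: leq_trans hx; by rewrite ltn_add2l.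
Qed.

Lemma trace_nthy (cy : {ffun 'I_n -> bool}) t : (t < w)%N -> nth false (trace cy Dy) (j + t) = cy (Bw t).
Proof.
move=> Ht; rewrite /trace (nth_map x0) //.
rewrite -/(fs Dy) size_fs; apply: leq_trans hy; by rewrite ltn_add2l.
Qed.

Lemma origins_nthx t : (t < w)%N -> nth 0%N (origins Dx) (i + t) = Aw t.
Proof.
move=> Ht; rewrite origins_fs (nth_map x0) //.
rewrite size_fs; apply: leq_trans hx; by rewrite ltn_add2l.
Qed.

Lemma origins_nthy t : (t < w)%N -> nth 0%N (origins Dy) (j + t) = Bw t.
Proof.
move=> Ht; rewrite origins_fs (nth_map x0) //.
rewrite size_fs; apply: leq_trans hy; by rewrite ltn_add2l.
Qed.

Lemma window_Sk cx cy : window_dist (trace cx Dx) (trace cy Dy) i j w = Sk Aw Bw w cx cy.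
Proof.
rewrite /window_dist /Sk; apply: eq_bigr => t _.
rewrite trace_nthx // trace_nthy // /Zb.
case: (cx (Aw t)); case: (cy (Bw t)); rewrite /b2R /= RabsE RminusE ?subrr ?subr0 ?sub0r ?normrN ?normr0 ?normr1 //.
Qed.

Lemma mu0_eq :
  mu0 Aw Bw w = Rplus (Rdiv (INR (same_origin_count Dx Dy i j w)) 3)
                      (Rdiv (INR (w - same_origin_count Dx Dy i j w)) 2).
Proof.
set q := same_origin_count Dx Dy i j w; set r := (w - q)%N.
rewrite /mu0 /pt.
rewrite (eq_bigr (fun t : 'I_w => if (fun t => nth 0%N (origins Dx) (i + t) == nth 0%N (origins Dy) (j + t)) t then 3^-1 else 2^-1)); last first.
  by move=> t _ /=; rewrite origins_nthx // origins_nthy.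
rewrite (sum_if_count (fun t => nth 0%N (origins Dx) (i + t) == nth 0%N (origins Dy) (j + t))).
rewrite -/(same_origin_count Dx Dy i j w) -/q -/r.
rewrite RplusE !RdivE !INRE !IZRposE !INRE /=.
ring.
Qed.

End Link.

Lemma two_R : (2%:R : R) = IZR 2.
Proof. by rewrite IZRposE INRE. Qed.

Theorem lemma6_main (n : nat) (Dx Dy : {ffun 'I_n -> bool}) (i j w : nat)
  (hx : (i + w <= size (origins Dx))%N) (hy : (j + w <= size (origins Dy))%N)
  (beta : R) (hbeta : Rlt 0 beta) :
  let q := same_origin_count Dx Dy i j w in
  let r := (w - q)%N in
  Rle (trace_prob Dx Dy (fun x y =>
     Rle_dec beta (Rabs (window_dist x y i j w - (INR q / 3 + INR r / 2)))))
   (2 * exp (- 2 * beta ^ 2 / INR w)).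
Proof.
cbv zeta.
have [w0|wpos] := posnP w.
  apply/RleP; rewrite trace_prob_Ex.
  apply: le_trans (Ex_le (G := fun _ _ => 1) _) _.
    by move=> cx cy /=; case: ifP => _; lra.
  rewrite Ex1 w0 /= /Rdiv Rinv_0 Rmult_0_r exp_0.
  apply/RleP; rewrite -R1E; Lra.lra.
have npos : (0 < n)%N.
  have : (size (origins Dx) <= n)%N.
    by rewrite origins_fs size_map size_filter -[X in (_ <= X)%N](size_enum_ord n) count_size.
  move=> H; apply: leq_trans H; apply: leq_trans hx; by rewrite addn_gt0 wpos orbT.
pose x0 := Ordinal npos.
have HW : Rlt 0 (INR w) by rewrite INRE; apply/RltP; rewrite ltr0n.
have Hs' : Rlt 0 (4 * beta / INR w).
  apply: Rdiv_lt_0_compat => //; Lra.lra.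
have Hs := introT RltP Hs'.
apply/RleP; rewrite trace_prob_Ex.
rewrite (Ex_ext (G := fun cx cy => if is_left (Rle_dec beta (Rabs (Sk (Aw Dx i x0) (Bw Dy j x0) w cx cy - mu0 (Aw Dx i x0) (Bw Dy j x0) w))) then 1 else 0)); last first.
  by move=> cx cy; rewrite (window_Sk hx hy x0) (mu0_eq hx hy x0).
apply: le_trans (tail_bound (hA hx x0) (hB hy x0) beta Hs) _.
rewrite two_R -!RmultE final_arith //.
Qed.

Local Close Scope ring_scope.
Local Open Scope R_scope.

(* Windows are 0-based: x_i..x_{i+w-1} means nth (i+t), t < w. *)
Theorem lemma6 (n : nat) (Dx Dy : {ffun 'I_n -> bool}) (i j w : nat)
  (hx : (i + w <= size (origins Dx))%N) (hy : (j + w <= size (origins Dy))%N)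
  (beta : R) (hbeta : Rlt 0 beta) :
  let q := same_origin_count Dx Dy i j w in
  let r := (w - q)%N in
  Rle (trace_prob Dx Dy (fun x y =>
     Rle_dec beta (Rabs (window_dist x y i j w - (INR q / 3 + INR r / 2)))))
   (2 * exp (- 2 * beta ^ 2 / INR w)).
Proof. exact: (lemma6_main hx hy hbeta). Qed.
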